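(* Let $G\in\mathcal{G}_3$ be simply connected and suppose every interior edge of $G$ has even degree. Then $G$ can be properly vertex colored with $4$ colors.
   Context: All graphs are finite simple graphs $G=(V,E)$. For a vertex $x$, $S(x)$ is the subgraph induced by the neighbors of $x$. A graph is contractible if it is $K_1$, or, inductively, if there is a vertex $x$ with both $S(x)$ and the subgraph induced by $V\setminus\{x\}$ contractible. $\mathcal{G}_0$: graphs without edges; $\mathcal{S}_0$: those with two vertices; $\mathcal{B}_0$: those with one vertex. For $d\ge1$: $\mathcal{G}_d$ is the class of graphs in which every $S(x)$ lies in $\mathcal{S}_{d-1}\cup\mathcal{B}_{d-1}$; the boundary is the subgraph induced by vertices with $S(x)\in\mathcal{B}_{d-1}$, and the interior must be nonempty; $\mathcal{B}_d$: contractible graphs in $\mathcal{G}_d$ with boundary in $\mathcal{S}_{d-1}$; $\mathcal{S}_d$: non-contractible graphs in $\mathcal{G}_d$ such that removing any single vertex yields a graph in $\mathcal{B}_d$. For $G\in\mathcal{G}_3$ and an edge $e=(a,b)$, the degree of $e$ is the number of vertices of $S(a)\cap S(b)$ (the number of tetrahedra containing $e$); $e$ is interior if $S(a)\cap S(b)$ is a cycle graph. A closed path is a sequence $x_0,x_1,\dots,x_n=x_0$ of vertices with consecutive ones adjacent; two closed paths are homotopic if one can be transformed into the other by finitely many steps of the following types and their inverses: replacing a backtrack $a,b,a$ by $a$ (or $a,a$ by $a$), and replacing $a,b,c$ by $a,c$ when $(a,b,c)$ is a triangle. $G$ is simply connected if it is connected and every closed path is homotopic to a constant path. *)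

(* Defs.v *)
(* A finite simple graph is a finType T with a symmetric,
   irreflexive relation e. All graphs in the recursive definitions are induced
   subgraphs of (T, e) and are represented by their vertex sets U : {set T}. *)
From mathcomp Require Import all_boot.
From Stdlib Require Import Relations.
Set Implicit Arguments. Unset Strict Implicit. Unset Printing Implicit Defensive.

Section Graphs.
Variables (T : finType) (e : rel T).

Definition nbr (U : {set T}) (x : T) : {set T} := [set y in U | e x y].

Inductive contractible (U : {set T}) : Prop :=
| contr_K1 : #|U| = 1 -> contractible U
| contr_step (x : T) : x \in U -> contractible (nbr U x) ->
    contractible (U :\ x) -> contractible U.

Definition noedge (U : {set T}) : Prop :=
  forall x y, x \in U -> y \in U -> ~~ e x y.

Definition Gstep (SB : ({set T} -> Prop) * ({set T} -> Prop)) (U : {set T}) : Prop :=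
  (forall x, x \in U -> SB.1 (nbr U x) \/ SB.2 (nbr U x)) /\
  (exists x, x \in U /\ SB.1 (nbr U x)).

Definition is_boundary (Bp : {set T} -> Prop) (U W : {set T}) : Prop :=
  forall x, x \in W <-> (x \in U /\ Bp (nbr U x)).

(* SB d = (S_d, B_d) *)
Fixpoint SB (d : nat) : ({set T} -> Prop) * ({set T} -> Prop) :=
  match d with
  | 0 => (fun U => noedge U /\ #|U| = 2, fun U => noedge U /\ #|U| = 1)
  | d'.+1 =>
      let p := SB d' in
      let Bd := fun U => contractible U /\ Gstep p U /\
                 exists W, is_boundary p.2 U W /\ p.1 W in
      (fun U => Gstep p U /\ ~ contractible U /\
                 (forall x, x \in U -> Bd (U :\ x)), Bd)
  end.

Definition Gclass (d : nat) (U : {set T}) : Prop :=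
  match d with
  | 0 => noedge U
  | d'.+1 => Gstep (SB d') U
  end.

Definition is_cycle_graph (W : {set T}) : Prop :=
  2 < #|W| /\ (forall x, x \in W -> #|nbr W x| = 2) /\
  (forall x y, x \in W -> y \in W ->
     connect [rel a b | e a b && (a \in W) && (b \in W)] x y).

Definition edge_link (a b : T) : {set T} := nbr setT a :&: nbr setT b.
Definition edge_degree (a b : T) : nat := #|edge_link a b|.
Definition interior_edge (a b : T) : Prop := is_cycle_graph (edge_link a b).

(* closed paths and homotopy; consecutive vertices are adjacent (or equal,
   matching the rule "a,a -> a") *)
Definition closed_path (p : seq T) : Prop :=
  match p with
  | [::] => False
  | x :: q => path (fun a b => (a == b) || e a b) x q /\ last x q = x
  end.

Definition triangle (a b c : T) : Prop := e a b /\ e b c /\ e a c.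

Definition elem_step (p q : seq T) : Prop :=
  exists (s1 s2 : seq T) (a b c : T),
    (p = s1 ++ [:: a; b; a] ++ s2 /\ q = s1 ++ [:: a] ++ s2) \/
    (p = s1 ++ [:: a; a] ++ s2 /\ q = s1 ++ [:: a] ++ s2) \/
    (p = s1 ++ [:: a; b; c] ++ s2 /\ q = s1 ++ [:: a; c] ++ s2 /\ triangle a b c).

Definition hstep (p q : seq T) : Prop :=
  closed_path p /\ closed_path q /\ elem_step p q.

Definition homotopic : relation (seq T) := clos_refl_sym_trans (seq T) hstep.

Definition graph_connected : Prop := forall x y : T, connect e x y.

Definition simply_connected : Prop :=
  graph_connected /\
  forall x q, closed_path (x :: q) -> homotopic (x :: q) [:: x].

End Graphs.

(* Main.v *)
From Stdlib Require Import Relations ClassicalEpsilon.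
Require Import Defs.
From mathcomp Require Import all_boot zify.
Set Implicit Arguments. Unset Strict Implicit. Unset Printing Implicit Defensive.

Section Basic.
Variables (T : finType) (e : rel T).
Hypotheses (e_sym : symmetric e) (e_irr : irreflexive e).
Implicit Types (U V W : {set T}) (x y z u v w a b : T).

Definition rU (U : {set T}) := [rel a b | e a b && (a \in U) && (b \in U)].
Definition connectedU (U : {set T}) :=
  forall x y, x \in U -> y \in U -> connect (rU U) x y.

Lemma nbrP U x y : (y \in nbr e U x) = (y \in U) && e x y.
Proof. by rewrite inE. Qed.

Lemma nbr_sub U x : nbr e U x \subset U.
Proof. by apply/subsetP=> y; rewrite nbrP => /andP[]. Qed.

Lemma contr_nonempty U : contractible e U -> exists x, x \in U.
Proof.
case=> [/eqP/cards1P [x ->]|x Hx _ _]; [exists x; exact: set11 | by exists x].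
Qed.

Lemma rU_sym U : symmetric (rU U).
Proof. by move=> a b /=; rewrite (e_sym a b); case: (e b a); case: (a \in U); case: (b \in U). Qed.

Lemma connect_mono (V U : {set T}) : V \subset U ->
  forall x y, connect (rU V) x y -> connect (rU U) x y.
Proof.
move=> /subsetP sVU x y; apply: connect_sub => a b /= /andP[/andP[eab aV] bV].
by apply: connect1; rewrite /= eab !sVU.
Qed.

Lemma connected_add U x u : x \in U -> connectedU (U :\ x) ->
  u \in nbr e U x -> connectedU U.
Proof.
move=> xU cU uN.
have /andP[uU exu] : (u \in U) && e x u by rewrite -nbrP.
have ux : u != x by apply: contraTneq exu => ->; rewrite e_irr.
have uUx : u \in U :\ x by rewrite !inE ux.
have sub : U :\ x \subset U by apply: subsetDl.
have Hx : forall y, y \in U -> connect (rU U) x y.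
  move=> y yU; case: (eqVneq y x) => [->|yx]; first exact: connect0.
  apply: (connect_trans (y:=u)); first by apply: connect1; rewrite /= exu xU uU.
  by apply: connect_mono sub _ _ (cU u y uUx _); rewrite !inE yx.
move=> a b aU bU.
case: (eqVneq a x) => [->|ax]; first exact: Hx.
case: (eqVneq b x) => [->|bx].
  by rewrite (sym_connect_sym (rU_sym U)); exact: Hx.
by apply: connect_mono sub _ _ (cU a b _ _); rewrite !inE ?ax ?bx.
Qed.

Lemma contr_connected U : contractible e U -> connectedU U.
Proof.
elim=> {U} [U /eqP/cards1P [z ->] a b|U x xU cN _ _ IH].
  by rewrite !inE => /eqP-> /eqP->; exact: connect0.
case: (contr_nonempty cN) => u uN; exact: connected_add xU IH uN.
Qed.

Definition Sd d := (SB e d).1.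
Definition Bd d := (SB e d).2.

Lemma Bd_succ d U : Bd d.+1 U -> contractible e U /\ Gstep e (SB e d) U.
Proof. by case=> [? [? _]]. Qed.

Lemma Sd_succ d U : Sd d.+1 U ->
  [/\ Gstep e (SB e d) U, ~ contractible e U & forall x, x \in U -> Bd d.+1 (U :\ x)].
Proof. by case=> [? [? ?]]. Qed.

Lemma SB_nonempty d U : Sd d U \/ Bd d U -> exists x, x \in U.
Proof.
case: d => [|d].
  have H : 0 < #|U| -> exists x, x \in U by move=> /card_gt0P.
  by case=> [[_ E]|[_ E]]; apply: H; rewrite E.
case=> [/Sd_succ [[_ [x [xU _]]] _ _]|/Bd_succ [/contr_nonempty //]]; by exists x.
Qed.

Lemma SB_connected d U : Sd d.+1 U \/ Bd d.+1 U -> connectedU U.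
Proof.
case=> [/Sd_succ [G _ HB]|/Bd_succ [/contr_connected //]].
case: G => Hl [x [xU _]].
have [u uN] := SB_nonempty (Hl x xU).
apply: (connected_add xU _ uN).
by have /Bd_succ [/contr_connected] := HB x xU.
Qed.

End Basic.


Section Col1.
Variables (T : finType) (e : rel T).
Hypotheses (e_sym : symmetric e) (e_irr : irreflexive e).
Implicit Types (U V W A B : {set T}) (x y z u v w : T) (P : {set 'I_4}) (k : 'I_4) (g c d : T -> 'I_4).

Definition proper_on (P : {set 'I_4}) U (c : T -> 'I_4) :=
  (forall x, x \in U -> c x \in P) /\
  (forall x y, x \in U -> y \in U -> e x y -> c x != c y).

Lemma proper_sub P U V c : V \subset U -> proper_on P U c -> proper_on P V c.
Proof.
move=> /subsetP s [H1 H2]; split=> [x /s|x y /s xU /s yU]; [exact: H1|exact: H2].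
Qed.

Lemma proper_agree P U c d : (forall x, x \in U -> c x = d x) ->
  proper_on P U c -> proper_on P U d.
Proof.
move=> E [H1 H2]; split=> [x xU|x y xU yU]; first by rewrite -E ?H1.
by rewrite -!E //; apply: H2.
Qed.

Lemma extend_col P A x k g : k \in P -> proper_on P A g ->
  (forall y, y \in A -> e x y -> g y != k) ->
  proper_on P (x |: A) (fun z => if z == x then k else g z).
Proof.
move=> kP [H1 H2] Hk; split=> [z|z y].
  by rewrite !inE; case: (eqVneq z x) => // _ /= /H1.
rewrite !inE; case: (eqVneq z x) => [->|zx]; case: (eqVneq y x) => [->|yx] //=.
- by rewrite e_irr.
- by move=> _ yA exy; rewrite eq_sym; apply: Hk.
- by move=> zA _ ezx; apply: Hk => //; rewrite e_sym.
- exact: H2.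
Qed.

Lemma noedge_sub A B : A \subset B -> noedge e B -> noedge e A.
Proof. by move=> /subsetP s nB x y /s xB /s yB; apply: nB. Qed.

Lemma contr_noedge_card1 A : contractible e A -> noedge e A -> #|A| = 1.
Proof.
case=> [//|x xA cN _] nA; exfalso.
have [y] := contr_nonempty cN; rewrite nbrP => /andP[yA exy].
by move: (nA x y xA yA); rewrite exy.
Qed.

Definition other (a b k : 'I_4) := if k == a then b else a.

Lemma other_in a b k : other a b k \in [set a; b].
Proof. by rewrite /other !inE; case: (k == a); rewrite eqxx ?orbT. Qed.

Lemma other_neq a b k : a != b -> k \in [set a; b] -> other a b k != k.
Proof.
move=> ab; rewrite /other !inE => /orP[/eqP->|/eqP->]; first by rewrite eqxx eq_sym.
by rewrite [b == a]eq_sym (negbTE ab).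
Qed.

Lemma tree2col U (a b : 'I_4) : a != b -> contractible e U ->
  (forall y, y \in U -> noedge e (nbr e U y)) ->
  exists g, proper_on [set a; b] U g.
Proof.
move=> ab cU; elim: cU => {U} [U /eqP/cards1P [z ->] _|U x xU cN _ _ IH nU].
  exists (fun _ => a); split=> [x _|x y]; first by rewrite !inE eqxx.
  by rewrite !inE => /eqP-> /eqP->; rewrite e_irr.
have [g Hg] : exists g, proper_on [set a; b] (U :\ x) g.
  apply: IH => y; rewrite inE => /andP[_ yU]; apply: noedge_sub (nU y yU).
  by apply/subsetP=> z; rewrite !inE => /andP[/andP[_ ->] ->].
have /eqP/cards1P [u Nu] := contr_noedge_card1 cN (nU x xU).
have uU : u \in U :\ x.
  have : u \in nbr e U x by rewrite Nu set11.
  rewrite nbrP => /andP[uU exu]; rewrite !inE uU andbT.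
  by apply: contraTneq exu => ->; rewrite e_irr.
exists (fun z => if z == x then other a b (g u) else g z).
rewrite -{1}(setD1K xU); apply: extend_col => //; first exact: other_in.
move=> y yU exy.
have : y \in nbr e U x by rewrite nbrP exy andbT; move: yU; rewrite inE => /andP[].
rewrite Nu inE => /eqP->; rewrite eq_sym; apply: other_neq => //.
by case: Hg => H1 _; apply: H1.
Qed.

Lemma G1_noedge W : Gstep e (SB e 0) W -> forall y, y \in W -> noedge e (nbr e W y).
Proof. by case=> H _ y /H [[]|[]]. Qed.

Lemma B1_col W (a b : 'I_4) : a != b -> Bd e 1 W -> exists g, proper_on [set a; b] W g.
Proof.
move=> ab /Bd_succ [cW G]; apply: tree2col => //; exact: G1_noedge.
Qed.

Lemma S1_deg2 W : Sd e 1 W -> forall y, y \in W -> #|nbr e W y| = 2.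
Proof.
move=> /Sd_succ [[G _] nc HB] y yW; case: (G y yW) => [[_ //]|[_ H1]].
exfalso; apply: nc; apply: (contr_step yW); first exact: contr_K1.
by case: (HB y yW).
Qed.

Lemma card_sumT (S : {set T}) : #|S| = \sum_z (z \in S : nat).
Proof. by rewrite -sum1_card big_mkcond /=; apply: eq_bigr => z _; case: (z \in S). Qed.


Lemma two_count W' g (a b : 'I_4) :
  (forall z, z \in W' -> (g z == a) || (g z == b)) ->
  (forall x y, x \in W' -> y \in W' -> e x y -> g x != g y) ->
  \sum_y ((y \in W') && (g y == a)) * #|nbr e W' y| =
  \sum_y ((y \in W') && (g y == b)) * #|nbr e W' y|.
Proof.
move=> Hab Hp.
pose chi y z : nat := [&& (y \in W') && (g y == a), (z \in W') && (g z == b) & e y z].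
have L : forall y, ((y \in W') && (g y == a)) * #|nbr e W' y| = \sum_z chi y z.
  move=> y; case Ay: ((y \in W') && (g y == a)); last first.
    by rewrite mul0n big1 // => z _; rewrite /chi Ay.
  move: Ay => /andP[yW /eqP gya].
  rewrite mul1n card_sumT; apply: eq_bigr => z _; rewrite /chi nbrP yW gya eqxx /=.
  case zW : (z \in W') => //=; case eyz : (e y z); rewrite ?andbT ?andbF //=.
  have := Hp y z yW zW eyz; rewrite gya.
  by have /orP[/eqP-> | /eqP->] := Hab z zW; rewrite ?eqxx.
have R : forall z, ((z \in W') && (g z == b)) * #|nbr e W' z| = \sum_y chi y z.
  move=> z; case Bz: ((z \in W') && (g z == b)); last first.
    by rewrite mul0n big1 // => y _; rewrite /chi Bz andbF.
  move: Bz => /andP[zW /eqP gzb].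
  rewrite mul1n card_sumT; apply: eq_bigr => y _; rewrite /chi nbrP zW gzb eqxx /=.
  rewrite (e_sym y z).
  case yW : (y \in W') => //=; case ezy : (e z y); rewrite ?andbT ?andbF //=.
  have := Hp z y zW yW ezy; rewrite gzb.
  by have /orP[/eqP-> | /eqP->] := Hab y yW; rewrite ?eqxx.
rewrite (eq_bigr _ (fun y _ => L y)) exchange_big /=.
by apply: eq_bigr => z _; rewrite R.
Qed.


Lemma pal2 (a b A B k : 'I_4) : A \in [set a; b] -> B \in [set a; b] -> A != B ->
  k \in [set a; b] -> (k == A) || (k == B).
Proof.
rewrite !inE => /orP[/eqP->|/eqP->] /orP[/eqP->|/eqP->] //; rewrite ?eqxx //;
  move=> _ /orP[/eqP->|/eqP->]; rewrite ?eqxx ?orbT //.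
Qed.

Lemma sum_pick (f : T -> nat) u : \sum_y f y * (y == u) = f u.
Proof.
rewrite (bigD1 u) //= eqxx muln1 big1 ?addn0 // => y /negbTE->; by rewrite muln0.
Qed.

Lemma S1_col W (a b : 'I_4) : a != b -> Sd e 1 W -> ~~ odd #|W| ->
  exists g, proper_on [set a; b] W g.
Proof.
move=> ab S1W evW.
have deg2 := S1_deg2 S1W.
move: S1W => /Sd_succ [[_ [x [xW _]]] _ HB].
have [g [Hg1 Hg2]] := B1_col ab (HB x xW).
set W' := W :\ x in Hg1 Hg2.
have /cards2P [u1 [u2 [u12 Nx]]] : #|nbr e W x| == 2 by rewrite deg2.
have inW' : forall u, u \in nbr e W x -> u \in W'.
  move=> u; rewrite nbrP => /andP[uW exu]; rewrite !inE uW andbT.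
  by apply: contraTneq exu => ->; rewrite e_irr.
have u1W : u1 \in W' by apply: inW'; rewrite Nx !inE eqxx.
have u2W : u2 \in W' by apply: inW'; rewrite Nx !inE eqxx orbT.
have same : g u1 = g u2.
  apply/eqP/negPn/negP => ne.
  have Hab : forall z, z \in W' -> (g z == (g u1)) || (g z == (g u2)).
    by move=> z zW; apply: (pal2 (a:=a) (b:=b)); rewrite ?Hg1.
  have cnt := two_count Hab Hg2.
  have deg : forall y, y \in W' -> #|nbr e W' y| + ((y == u1) + (y == u2)) = 2.
    move=> y yW.
    have -> : nbr e W' y = nbr e W y :\ x.
      by apply/setP=> z; rewrite !inE; case: (z == x); rewrite ?andbF.
    have yW0 : y \in W by move: yW; rewrite inE => /andP[].
    rewrite -(deg2 y yW0) (cardsD1 x (nbr e W y)) addnC; congr (_ + _).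
    have -> : x \in nbr e W y = (y \in nbr e W x) by rewrite !nbrP xW yW0 e_sym.
    rewrite Nx !inE; case: (eqVneq y u1) => [->|]; last by case: (y == u2).
    by rewrite (negbTE u12).
  have key : forall C, \sum_y ((y \in W') && (g y == C)) * #|nbr e W' y| +
        (((u1 \in W') && (g u1 == C)) + ((u2 \in W') && (g u2 == C))) =
        2 * \sum_y ((y \in W') && (g y == C)).
    move=> C; rewrite -(sum_pick (fun y => (y \in W') && (g y == C)) u1).
    rewrite -(sum_pick (fun y => (y \in W') && (g y == C)) u2) -!big_split /=.
    rewrite big_distrr /=; apply: eq_bigr => y _.
    case: (boolP (y \in W')) => yW /=; last by rewrite !mul0n.
    by case: (g y == C); rewrite ?mul0n ?muln0 // !mul1n muln1 (deg y yW).
  have kA := key (g u1); have kB := key (g u2).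
  rewrite u1W u2W /= eqxx (eq_sym (g u2)) (negbTE ne) /= in kA.
  rewrite u1W u2W /= eqxx (negbTE ne) /= in kB.
  rewrite cnt in kA; rewrite kA in kB.
  have eqAB : \sum_y ((y \in W') && (g y == (g u1)) : nat) =
              \sum_y ((y \in W') && (g y == (g u2)) : nat).
    by apply/eqP; rewrite -(eqn_pmul2l (_ : 0 < 2)) // kB.
  have cW' : #|W'| = \sum_y ((y \in W') && (g y == (g u1)) : nat) +
                     \sum_y ((y \in W') && (g y == (g u2)) : nat).
    rewrite card_sumT -big_split /=; apply: eq_bigr => y _.
    case: (boolP (y \in W')) => yW //=.
    have /orP[/eqP->|/eqP->] := Hab y yW; rewrite eqxx ?(negbTE ne) //.
    by rewrite eq_sym (negbTE ne).
  move: evW; rewrite (cardsD1 x W) xW -/W' cW' eqAB addnn /= odd_double.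
  by [].
exists (fun z => if z == x then other a b (g u1) else g z).
rewrite -(setD1K xW); apply: extend_col => //; first exact: other_in.
move=> y yW exy.
have : y \in nbr e W x by rewrite nbrP exy andbT; move: yW; rewrite inE => /andP[].
rewrite Nx !inE => /orP[/eqP->|/eqP->]; rewrite ?same eq_sym; apply: other_neq => //;
  apply: Hg1; rewrite ?u1W ?u2W //.
Qed.


Lemma S1_cycle W : Sd e 1 W -> is_cycle_graph e W.
Proof.
move=> S1W; have deg2 := S1_deg2 S1W.
have cW : connectedU e W by apply: (@SB_connected _ _ e_sym e_irr 0); left.
move: S1W => /Sd_succ [[_ [y [yW _]]] _ _].
split; last by split.
have sub : nbr e W y \subset W :\ y.
  apply/subsetP=> z; rewrite nbrP !inE => /andP[-> eyz]; rewrite andbT.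
  by apply: contraTneq eyz => ->; rewrite e_irr.
have := subset_leq_card sub; rewrite deg2 // (cardsD1 y W) yW.
by case: #|W :\ y| => [|[|n]].
Qed.

Lemma col1D W (a b : 'I_4) y0 k : a != b -> k \in [set a; b] -> y0 \in W ->
  (Bd e 1 W \/ (Sd e 1 W /\ ~~ odd #|W|)) ->
  exists g, proper_on [set a; b] W g /\ g y0 = k.
Proof.
move=> ab kab y0W H.
have [g [Hg1 Hg2]] : exists g, proper_on [set a; b] W g.
  by case: H => [/(B1_col ab)|[/(S1_col ab) H /H]].
case: (eqVneq (g y0) k) => [E|NE]; first by exists g.
exists (fun z => other a b (g z)); split; first split.
- by move=> x _; apply: other_in.
- move=> x y xW yW exy; have := Hg2 x y xW yW exy.
  move: (Hg1 x xW) (Hg1 y yW); rewrite /other !inE.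
  by move=> /orP[/eqP->|/eqP->] /orP[/eqP->|/eqP->]; rewrite ?eqxx //;
    rewrite ?[b == a]eq_sym (negbTE ab) // eq_sym.
- move: (Hg1 y0 y0W) kab NE; rewrite /other !inE.
  by move=> /orP[/eqP->|/eqP->] /orP[/eqP->|/eqP->]; rewrite ?eqxx //;
    rewrite ?[b == a]eq_sym (negbTE ab).
Qed.

End Col1.


Section SCsec.
Variables (T : finType) (e : rel T).
Hypotheses (e_sym : symmetric e) (e_irr : irreflexive e).
Implicit Types (U V N : {set T}) (x y z u v w a b c : T) (p q s r L M ts : seq T).

Local Notation adj := (fun a b : T => (a == b) || e a b).
Definition inU U p := all (fun z => z \in U) p.
Definition hstepU U p q := hstep e p q /\ inU U p /\ inU U q.
Definition homU U := clos_refl_sym_trans (seq T) (hstepU U).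
Definition SC U := forall x q, closed_path e (x :: q) -> inU U (x :: q) ->
  homU U (x :: q) [:: x].

Lemma cpE z q : closed_path e (z :: q) <-> path adj z q /\ last z q = z.
Proof. by []. Qed.

Lemma cp_swap s a m m' r : closed_path e (s ++ a :: m ++ r) ->
  path adj a m' -> last a m' = last a m -> closed_path e (s ++ a :: m' ++ r).
Proof.
case: s => [|z s] /=.
  rewrite !cat_path !last_cat => -[/andP[_ H2] H3] Hm El.
  by rewrite El Hm H2 H3.
rewrite !cat_path !last_cat /= !cat_path !last_cat => -[/andP[H1 /andP[H2 /andP[_ H4]]] H5] Hm El.
by rewrite El H1 H2 Hm H4 H5.
Qed.

Lemma inU_swap U s a m m' r : inU U (s ++ a :: m ++ r) -> inU U m' ->
  inU U (s ++ a :: m' ++ r).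
Proof. by rewrite /inU !all_cat /= !all_cat => /andP[-> /andP[-> /andP[_ ->]]] ->. Qed.

Lemma head_cat x0 s a t t' : head x0 (s ++ a :: t) = head x0 (s ++ a :: t').
Proof. by case: s. Qed.

Lemma cp_last x0 p : closed_path e p -> last x0 p = head x0 p.
Proof. by case: p => // z q [_ /= ->]. Qed.

Lemma hom1 U p q : closed_path e p -> closed_path e q -> inU U p -> inU U q ->
  elem_step e p q -> homU U p q.
Proof. by move=> *; apply: rst_step. Qed.

Lemma homT U p q r : homU U p q -> homU U q r -> homU U p r.
Proof. exact: rst_trans. Qed.
Lemma homS U p q : homU U p q -> homU U q p.
Proof. exact: rst_sym. Qed.
Lemma homR U p : homU U p p.
Proof. exact: rst_refl. Qed.

Lemma hom_aa U s a r : closed_path e (s ++ a :: r) -> inU U (s ++ a :: r) ->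
  homU U (s ++ a :: a :: r) (s ++ a :: r).
Proof.
move=> Hc Hi; apply: hom1 => //.
- by apply: (@cp_swap s a [::] [:: a] r) => //=; rewrite /adj eqxx.
- apply: (@inU_swap U s a [::] [:: a] r) => //=; rewrite andbT.
  by move: Hi; rewrite /inU all_cat /= => /andP[_ /andP[]].
- by exists s, r, a, a, a; right; left.
Qed.

Lemma hom_back U s a b r : e a b -> b \in U ->
  closed_path e (s ++ a :: r) -> inU U (s ++ a :: r) ->
  homU U (s ++ a :: b :: a :: r) (s ++ a :: r).
Proof.
move=> eab bU Hc Hi; apply: hom1 => //.
- apply: (@cp_swap s a [::] [:: b; a] r) => //=; rewrite /adj eab e_sym eab !orbT //.
- apply: (@inU_swap U s a [::] [:: b; a] r) => //=; rewrite bU andbT.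
  by move: Hi; rewrite /inU all_cat /= => /andP[_ /andP[]].
- by exists s, r, a, b, a; left.
Qed.

Lemma hom_tri U s a b c r : e a b -> e b c -> e a c -> b \in U ->
  closed_path e (s ++ a :: c :: r) -> inU U (s ++ a :: c :: r) ->
  homU U (s ++ a :: b :: c :: r) (s ++ a :: c :: r).
Proof.
move=> eab ebc eac bU Hc Hi; apply: hom1 => //.
- apply: (@cp_swap s a [:: c] [:: b; c] r) => //=; rewrite /adj eab ebc !orbT //.
- apply: (@inU_swap U s a [:: c] [:: b; c] r) => //=; rewrite bU /=.
  by move: Hi; rewrite /inU all_cat /= => /andP[_ /and3P[_ ->]].
- by exists s, r, a, b, c; right; right.
Qed.

Lemma elem_head x0 p q : elem_step e p q -> head x0 p = head x0 q.
Proof.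
case=> [s1 [s2 [a [b [c [[-> ->]|[[-> ->]|[-> [-> _]]]]]]]]]; exact: head_cat.
Qed.

Lemma hom_inv U p q : homU U p q -> p = q \/
  [/\ closed_path e p, closed_path e q, inU U p, inU U q & forall x0, head x0 p = head x0 q].
Proof.
elim=> {p q} [p q [[Hp [Hq Hs]] [Ip Iq]]|p|p q _ [->|[? ? ? ? H]]|p m q _ H1 _ H2].
- by right; split => // x0; exact: elem_head.
- by left.
- by left.
- by right; split => // x0; rewrite H.
case: H1 => [->//|[Hp Hm Ip Im E1]]; case: H2 => [<-|[_ Hq _ Iq E2]]; right => //.
by split => // x0; rewrite E1 E2.
Qed.

Lemma hom_mono V U p q : V \subset U -> homU V p q -> homU U p q.
Proof.
move=> /subsetP sVU; elim=> {p q} [p q [H [Ip Iq]]|p|p q _ H|p m q _ H1 _ H2].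
- apply: rst_step; split => //; split; apply/allP => z Hz; apply: sVU;
  by [move/allP: Ip; apply | move/allP: Iq; apply].
- exact: rst_refl.
- exact: rst_sym.
- exact: rst_trans H1 H2.
Qed.


Lemma SC1 U z : U = [set z] -> SC U.
Proof.
move=> EU x q _ Hi.
have xz : x = z by move: Hi; rewrite /inU /= EU inE => /andP[/eqP].
have Hq : all (pred1 z) q.
  have /andP[_ H] : (x \in U) && all (fun z => z \in U) q by [].
  by apply: sub_all H => y; rewrite EU inE.
subst x; elim: q Hq Hi => [|y q IH] /=; first by move=> *; apply: rst_refl.
move=> /andP[/eqP-> Hq] /andP[zU Hi].
apply: homT (IH Hq _); last by [].
apply: (@hom_aa U [::] z q); last by [].
rewrite /=; split; last by elim: q Hq {IH Hi} => //= y' q' IH' /andP[/eqP-> /IH'].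
by elim: q Hq {IH Hi} => //= y' q' IH' /andP[/eqP-> /IH' ->]; rewrite eqxx.
Qed.

Lemma path_rU_all N u ts : path (rU e N) u ts -> all (fun z => z \in N) ts.
Proof. by elim: ts u => //= t ts IH u /andP[/andP[/andP[_ _] ->] /IH]. Qed.

Lemma sweep U x : x \in U -> forall ts u, path (rU e (nbr e U x)) u ts ->
  u \in nbr e U x -> forall s r, closed_path e (s ++ u :: x :: r) ->
  inU U (s ++ u :: x :: r) -> homU U (s ++ u :: x :: r) (s ++ u :: ts ++ x :: r).
Proof.
move=> xU; elim=> [|t ts IH] u Hp uN s r Hc Hi; first exact: rst_refl.
move: Hp => /= /andP[/andP[/andP[eut _] tN] Hp].
have /andP[tU ext] : (t \in U) && e x t by rewrite -nbrP.
have /andP[uU exu] : (u \in U) && e x u by rewrite -nbrP.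
have Hc' : closed_path e (s ++ u :: t :: x :: r).
  apply: (@cp_swap s u [:: x] [:: t; x] r) => //=.
  by rewrite /= eut e_sym ext !orbT.
have Hi' : inU U (s ++ u :: t :: x :: r).
  by apply: (@inU_swap U s u [:: x] [:: t; x] r) => //=; rewrite tU xU.
apply: (@homT U _ (s ++ u :: t :: x :: r)).
  apply: homS; apply: hom_tri => //; by rewrite e_sym.
have := IH t Hp tN (rcons s u) r; rewrite !cat_rcons; apply => //.
Qed.


Lemma noX U x p : x \notin p -> SC (U :\ x) -> closed_path e p -> inU U p ->
  homU U p [:: head x p].
Proof.
case: p => // b q Hx SCx Hc Hi.
apply: (hom_mono (subsetDl U [set x])); apply: SCx => //.
apply/allP=> z zp; rewrite !inE; move/allP: Hi => /(_ z zp) ->; rewrite andbT.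
by apply: contraNneq Hx => <-.
Qed.

Lemma cp_adj s a b t : closed_path e (s ++ a :: b :: t) -> (a == b) || e a b.
Proof.
case: s => [|z s] /=; first by case=> /andP[].
by case; rewrite cat_path => /andP[_ /= /and3P[]].
Qed.

Lemma path_rU_adj N u ts : path (rU e N) u ts -> path adj u ts.
Proof.
by elim: ts u => //= t ts IH u /andP[/andP[/andP[-> _] _] /IH ->]; rewrite orbT.
Qed.

Lemma reroute1 U x : x \in U -> connectedU e (nbr e U x) -> SC (U :\ x) ->
  forall n p, count_mem x p <= n -> closed_path e p -> inU U p ->
  head x p != x -> homU U p [:: head x p].
Proof.
move=> xU cN SCx; elim=> [|n IH] p.
  rewrite leqn0 => c0 Hc Hi _; apply: noX => //; by rewrite -has_pred1 has_count (eqP c0).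
move=> cp Hc Hi hx.
have AA : forall S R, count_mem x (S ++ x :: x :: R) <= n.+1 ->
    closed_path e (S ++ x :: x :: R) -> inU U (S ++ x :: x :: R) ->
    head x (S ++ x :: x :: R) != x -> homU U (S ++ x :: x :: R) [:: head x (S ++ x :: x :: R)].
  move=> S R c Hc1 Hi1 hx1.
  have Hc' : closed_path e (S ++ x :: R).
    by apply: (@cp_swap S x [:: x] [::] R).
  have Hi' : inU U (S ++ x :: R) by apply: (@inU_swap U S x [:: x] [::] R).
  apply: homT (hom_aa Hc' Hi') _.
  rewrite (head_cat _ S x (x :: R) R) in hx1 *; apply: IH => //.
  move: c; rewrite !count_cat /= eqxx; lia.
case: (boolP (x \in p)) => xp; last by apply: noX.
have [s [r Ep]] : exists s r, p = s ++ x :: r by case/splitPr: xp => s r; exists s, r.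
subst p; clear xp.
case/lastP: s cp Hc Hi hx => [|s0 u] cp Hc Hi hx; first by rewrite /= eqxx in hx.
rewrite cat_rcons in cp Hc Hi hx *.
case: (eqVneq u x) => [Eu|ux]; first by subst u; apply: AA.
case: r cp Hc Hi hx => [|w r'] cp Hc Hi hx.
  have := cp_last x Hc; rewrite last_cat /= => E; by rewrite -E eqxx in hx.
case: (eqVneq w x) => [Ew|wx].
  subst w; rewrite -cat_rcons in cp Hc Hi hx *; exact: AA.
have uU : u \in U by move/allP: Hi; apply; rewrite mem_cat inE eqxx orbT.
have wU : w \in U by move/allP: Hi; apply; rewrite mem_cat !inE eqxx !orbT.
have uN : u \in nbr e U x.
  have := cp_adj Hc; rewrite (negbTE ux) /= => eux; by rewrite nbrP uU e_sym.
have wN : w \in nbr e U x.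
  have := @cp_adj (rcons s0 u) x w r'; rewrite cat_rcons => /(_ Hc).
  by rewrite eq_sym (negbTE wx) /= => exw; rewrite nbrP wU.
have /connectP [ts Hp Ew] := cN u w uN wN.
have tsN := path_rU_all Hp.
have xts : x \notin ts.
  apply/negP => /(allP tsN); by rewrite nbrP e_irr andbF.
have Eu : u :: ts = rcons (belast u ts) w by rewrite Ew; exact: lastI.
set ys := belast u ts in Eu.
have Hc3 : closed_path e (s0 ++ u :: ts ++ r').
  apply: (@cp_swap s0 u [:: x; w] ts r') => //; first exact: path_rU_adj Hp.
have Hi3 : inU U (s0 ++ u :: ts ++ r').
  apply: (@inU_swap U s0 u [:: x; w] ts r') => //.
  by apply/allP=> z /(allP tsN); rewrite nbrP => /andP[].
apply: (homT (@sweep U x xU ts u Hp uN s0 (w :: r') Hc Hi)).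
have E2 : s0 ++ u :: ts ++ x :: w :: r' = (s0 ++ ys) ++ w :: x :: w :: r'.
  by rewrite -catA -(cat_rcons w ys) -Eu.
have E3 : s0 ++ u :: ts ++ r' = (s0 ++ ys) ++ w :: r'.
  by rewrite -catA -(cat_rcons w ys) -Eu.
rewrite E2; apply: (homT (hom_back _ _ _ _)).
- by move: wN; rewrite nbrP e_sym => /andP[].
- exact: xU.
- by rewrite -E3.
- by rewrite -E3.
rewrite -E3 (head_cat _ s0 u (x :: w :: r') (ts ++ r')).
apply: IH => //; last by rewrite (head_cat _ s0 u (ts ++ r') (x :: w :: r')).
move: cp; rewrite !count_cat /= !count_cat /= (negbTE ux) (negbTE wx) eqxx.
have -> : count_mem x ts = 0 by apply/eqP; rewrite -leqn0 leqNgt -has_count has_pred1.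
lia.
Qed.


Lemma cp_wrap U x L : closed_path e L -> e x (head x L) ->
  closed_path e (x :: L ++ [:: x]).
Proof.
case: L => // z q [Hp Hl] /= exz; split; last by rewrite last_cat.
by rewrite /= cat_path Hp Hl /= exz (e_sym z x) exz !orbT.
Qed.

Lemma wrap U x u : e x u -> x \in U -> forall L L', homU U L L' ->
  L = L' \/ (head x L = u -> homU U (x :: L ++ [:: x]) (x :: L' ++ [:: x])).
Proof.
move=> exu xU.
suff H : forall L L', homU U L L' -> L = L' \/
    (closed_path e L /\ closed_path e L' /\ inU U L /\ inU U L' /\ head x L = head x L' /\
      (head x L = u -> homU U (x :: L ++ [:: x]) (x :: L' ++ [:: x]))).
  by move=> L L' /H [->|[_ [_ [_ [_ [_ ?]]]]]]; [left|right].
move=> L0 L1 H; elim: H => {L0 L1} [L L' [[Hc [Hc' Hs]] [I I']]|L|L L' _ IH|L M L' _ IH1 _ IH2].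
- right; do 4 split => //; split; first exact: elem_head.
  move=> hu; have hu' : head x L' = u by rewrite -(elem_head x Hs).
  apply: rst_step; split; first split; [|split|].
  + by apply: cp_wrap => //; rewrite hu.
  + by apply: cp_wrap => //; rewrite hu'.
  + case: Hs => [s1 [s2 [a [b [c [[-> ->]|[[-> ->]|[-> [-> Ht]]]]]]]]];
      exists (x :: s1), (s2 ++ [:: x]), a, b, c; rewrite /= -!catA //; by [left|right;left|right;right].
  + by split; rewrite /inU /= all_cat /= xU /= ?andbT.
- by left.
- case: IH => [->|[? [? [? [? [E H]]]]]]; [by left|right]; do 5 split => //.
  move=> hu; by apply: homS; apply: H; rewrite E.
case: IH1 => [->//|[Hc0 [Hc1 [I0 [I1 [E1 H1]]]]]].
case: IH2 => [<-|[_ [Hc2 [_ [I2 [E2 H2]]]]]]; right; first by split => //; split => //; split => //; split => //; split.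
do 4 split => //; split; first by rewrite E1.
by move=> hu; apply: homT (H1 hu) (H2 _); rewrite -E1.
Qed.

Lemma reroute U x : x \in U -> connectedU e (nbr e U x) ->
  (exists u, u \in nbr e U x) -> SC (U :\ x) -> SC U.
Proof.
move=> xU cN [u uN] SCx b q Hc Hi.
case: (eqVneq b x) => [Eb|bx]; last first.
  by have := reroute1 xU cN SCx (leqnn _) Hc Hi; apply.
subst b.
have /andP[uU exu] : (u \in U) && e x u by rewrite -nbrP.
have ux : u != x by apply: contraTneq exu => ->; rewrite e_irr.
case/lastP: q Hc Hi => [|q' z] Hc Hi; first exact: homR.
have zx : z = x by case: Hc => _; rewrite last_rcons.
subst z.
have Hc1 : closed_path e ([::] ++ x :: [:: u; x] ++ rcons q' x).
  apply: (@cp_swap [::] x [::] [:: u; x]) => //=.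
  by rewrite exu e_sym exu !orbT.
have Hi1 : inU U ([::] ++ x :: [:: u; x] ++ rcons q' x).
  by apply: (@inU_swap U [::] x [::] [:: u; x]) => //=; rewrite uU xU.
apply: homT; first apply: homS; first exact: (@hom_back U [::] x u (rcons q' x)).
have E1 : [::] ++ x :: [:: u; x] ++ rcons q' x = (x :: u :: x :: q') ++ x :: [::].
  by rewrite /= cats1.
rewrite /= -cats1 /= in Hc1 Hi1 *.
rewrite -/([:: x, u, x & q'] ++ [:: x]) in Hc1 Hi1 *.
apply: homT; first apply: homS; first exact: (@hom_back U (x :: u :: x :: q') x u [::]).
set L := u :: x :: q' ++ [:: x; u].
have EL : (x :: u :: x :: q') ++ [:: x; u; x] = x :: L ++ [:: x] by rewrite /L /= -catA.
rewrite EL.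
have HcL : closed_path e L.
  move: Hc1; rewrite /L /= !cat_path /= !last_cat /= => -[/and3P[_ _ /andP[H1 /andP[H2 _]]] _].
  by split => //; rewrite (e_sym u x) exu H1 H2 !orbT.
have HiL : inU U L.
  by move: Hi1; rewrite /L /inU /= !all_cat /= xU uU /=.
have hL := reroute1 xU cN SCx (leqnn _) HcL HiL ux.
case: (wrap exu xU hL) => [//|/(_ erefl) H].
apply: homT H _.
by apply: (@hom_back U [::] x u [::]) => //; rewrite /inU /= xU.
Qed.

Lemma contr_SC U : contractible e U -> SC U.
Proof.
elim=> {U} [U /eqP/cards1P [z ->]|U x xU cN _ _ IH]; first exact: SC1.
apply: (reroute xU) => //; first exact: (contr_connected e_sym e_irr cN).
exact: (contr_nonempty cN).
Qed.

Lemma SB2_SC U : Sd e 2 U \/ Bd e 2 U -> SC U.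
Proof.
case=> [/Sd_succ [[Hl [x [xU _]]] _ HB]|/Bd_succ [/contr_SC //]].
apply: (reroute xU).
- exact: (@SB_connected _ _ e_sym e_irr 0 _ (Hl x xU)).
- exact: (SB_nonempty (Hl x xU)).
- by have /Bd_succ [/contr_SC] := HB x xU.
Qed.

Lemma global_SC : simply_connected e -> SC [set: T].
Proof.
case=> _ H x0 q0 Hc _; move: (H x0 q0 Hc).
suff G : forall p q, homotopic e p q -> homU [set: T] p q by apply: G.
move=> p1 q1; elim=> {p1 q1} [p q Hs|p|p q _ IH|p m q _ IH1 _ IH2].
- apply: rst_step; split => //; split; apply/allP => z _; exact: in_setT.
- exact: homR.
- exact: homS.
- exact: homT IH1 IH2.
Qed.

End SCsec.


Section Mono.
Variables (T : finType) (e : rel T).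
Hypotheses (e_sym : symmetric e) (e_irr : irreflexive e).
Implicit Types (U V N : {set T}) (x y z u v w a b : T) (p q s r t L M ts : seq T)
  (c d : T -> 'I_4).
Local Notation adj := (fun a b : T => (a == b) || e a b).

Variables (U : {set T}) (P : {set 'I_4}).

Definition Bl v := v |: nbr e U v.
Definition good v c := proper_on e P (Bl v) c.
Definition agree (A : {set T}) c d := forall z, z \in A -> c z = d z.

Lemma agree_refl A c : agree A c c. Proof. by []. Qed.
Lemma agree_sym A c d : agree A c d -> agree A d c.
Proof. by move=> H z /H ->. Qed.
Lemma agree_trans A c1 c2 c3 : agree A c1 c2 -> agree A c2 c3 -> agree A c1 c3.
Proof. by move=> H1 H2 z zA; rewrite H1 ?H2. Qed.
Lemma agree_sub (A A' : {set T}) c d : A' \subset A -> agree A c d -> agree A' c d.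
Proof. by move=> /subsetP s H z /s /H. Qed.

Lemma good_agree v c d : agree (Bl v) c d -> good v c -> good v d.
Proof. exact: proper_agree. Qed.

Definition stepT v w c c' := good w c' /\
  ((v = w /\ agree (Bl v) c c') \/ (e v w /\ agree (Bl v :&: Bl w) c c')).

Fixpoint Tr p c c' {struct p} : Prop :=
  match p with
  | [::] => False
  | v :: q => match q with
              | [::] => agree (Bl v) c c'
              | w :: _ => exists c1, stepT v w c c1 /\ Tr q c1 c'
              end
  end.

Lemma Tr_cons v w q c c' : Tr [:: v, w & q] c c' = exists c1, stepT v w c c1 /\ Tr (w :: q) c1 c'.
Proof. by []. Qed.

Lemma Tr_start v q c d c' : Tr (v :: q) c c' -> agree (Bl v) c d -> Tr (v :: q) d c'.
Proof.
case: q => [|w q] /=; first by move=> H1 H2; apply: agree_trans (agree_sym H2) H1.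
move=> [c1 [[g1 [[E H]|[evw H]]] Ht]] Hcd; exists c1; split => //; split => //.
  by left; split => //; apply: agree_trans (agree_sym Hcd) H.
right; split => //; apply: agree_trans H.
by apply: agree_sub (agree_sym Hcd); apply: subsetIl.
Qed.

Lemma Tr_end v q c c' d : Tr (v :: q) c c' -> agree (Bl (last v q)) c' d -> Tr (v :: q) c d.
Proof.
elim: q v c => [|w q IH] v c /=; first by move=> H1 H2; apply: agree_trans H1 H2.
by move=> [c1 [H1 H2]] H3; exists c1; split => //; apply: IH.
Qed.

Definition upath p := match p with [::] => False | v :: q => path adj v q /\ inU U (v :: q) end.

Hypothesis Hext : forall v w, v \in U -> w \in U -> e v w -> forall c, good v c ->
  exists c', good w c' /\ agree (Bl v :&: Bl w) c c'.
Hypothesis Hdet : forall v w, v \in U -> w \in U -> e v w -> forall c1 c2,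
  good w c1 -> good w c2 -> agree (Bl v :&: Bl w) c1 c2 -> agree (Bl w) c1 c2.
Hypothesis Htri : forall a b w, a \in U -> b \in U -> w \in U -> e a b -> e b w -> e a w ->
  forall d1 d2, good w d1 -> good w d2 -> agree (Bl a :&: Bl b :&: Bl w) d1 d2 ->
  agree (Bl w) d1 d2.

Lemma Tr_total v q c : upath (v :: q) -> good v c ->
  exists c', Tr (v :: q) c c' /\ good (last v q) c'.
Proof.
elim: q v c => [|w q IH] v c /=; first by move=> _ gc; exists c.
move=> [/andP[avw Hp] /andP[vU /andP[wU Hi]]] gc.
have [c1 [g1 S1]] : exists c1, stepT v w c c1.
  case: (eqVneq v w) avw => [<-|nvw] /= avw.
    by exists c; split => //; left.
  have [c' [g' H']] := Hext vU wU avw gc; by exists c'; split => //; right.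
have [c' [Ht gc']] := IH w c1 (conj Hp (introT andP (conj wU Hi))) g1.
by exists c'; split => //; exists c1.
Qed.

Lemma Tr_det v q c d c1 d1 : upath (v :: q) -> good v c -> agree (Bl v) c d ->
  Tr (v :: q) c c1 -> Tr (v :: q) d d1 -> agree (Bl (last v q)) c1 d1.
Proof.
elim: q v c d => [|w q IH] v c d /=.
  move=> _ _ Hcd H1 H2; apply: agree_trans (agree_sym H1) _; exact: agree_trans Hcd H2.
move=> [/andP[avw Hp] /andP[vU /andP[wU Hi]]] gc Hcd [c2 [[g2 S2] T2]] [d2 [[h2 S3] T3]].
apply: (IH w c2 d2) => //; first by split => //; apply/andP.
case: S2 => [[E2 A2]|[e2 A2]]; case: S3 => [[E3 A3]|[e3 A3]].
- subst w; apply: agree_trans (agree_sym A2) _; exact: agree_trans Hcd A3.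
- by subst w; rewrite e_irr in e3.
- by subst w; rewrite e_irr in e2.
- apply: (Hdet vU wU e2) => //; apply: agree_trans (agree_sym A2) _.
  apply: agree_trans A3; apply: agree_sub Hcd; exact: subsetIl.
Qed.

Lemma Tr_split s x t c c' : Tr (s ++ x :: t) c c' ->
  exists c1, Tr (rcons s x) c c1 /\ Tr (x :: t) c1 c'.
Proof.
elim: s c => [|y s IH] c /=; first by move=> H; exists c.
case: s IH => [|w s] IH /= [c2 [S2 T2]].
  by exists c2; split => //; exists c2.
have [c1 [H1 H2]] := IH c2 T2; exists c1; split => //; by exists c2.
Qed.

Lemma Tr_catI s x t c c1 c' : Tr (rcons s x) c c1 -> Tr (x :: t) c1 c' ->
  Tr (s ++ x :: t) c c'.
Proof.
elim: s c => [|y s IH] c /=; first by move=> H1 H2; apply: Tr_start H2 (agree_sym H1).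
case: s IH => [|w s] IH /= [c2 [S2 T2]] H; exists c2; split => //.
  by apply: Tr_start H (agree_sym T2).
exact: IH T2 H.
Qed.

Lemma step_rev v w c c1 : good v c -> stepT v w c c1 -> stepT w v c1 c.
Proof.
move=> gc [g1 [[E A]|[evw A]]]; split => //.
  by left; subst w; split => //; apply: agree_sym.
right; split; first by rewrite e_sym.
by rewrite setIC; apply: agree_sym.
Qed.

Lemma Tr_good v q c c' : Tr (v :: q) c c' -> good v c -> good (last v q) c'.
Proof.
elim: q v c => [|w q IH] v c /=; first by move=> H g; apply: good_agree H g.
by move=> [c1 [[g1 _] T1]] _; apply: IH T1 g1.
Qed.

Lemma Tr_rev v q c c' : Tr (v :: q) c c' -> good v c -> Tr (rev (v :: q)) c' c.
Proof.
elim: q v c => [|w q IH] v c; first by move=> H _; apply: agree_sym.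
rewrite Tr_cons => -[c1 [S1 T1]] gc.
have := IH w c1 T1 (proj1 S1).
move=> H; rewrite rev_cons in H; rewrite rev_cons rev_cons.
rewrite -cats1 -cats1 -catA; apply: (Tr_catI (s:=rev q) (x:=w)); first exact: H.
by exists c; split => //; apply: step_rev.
Qed.


Lemma upath_cp p : closed_path e p -> inU U p -> upath p.
Proof. by case: p => // v q [Hp _] Hi. Qed.

Lemma upath_prefix s t : upath (s ++ t) -> s != [::] -> upath s.
Proof.
case: s => // v s /= [Hp Hi] _; split.
  by move: Hp; rewrite cat_path => /andP[].
by move: Hi; rewrite /inU /= all_cat => /andP[-> /andP[]].
Qed.

Lemma upath_suffix s x t : upath (s ++ x :: t) -> upath (x :: t).
Proof.
case: s => // v s /= [Hp Hi]; split.
  by move: Hp; rewrite cat_path => /andP[_ /= /andP[]].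
by move: Hi; rewrite /inU /= all_cat => /andP[_ /andP[]].
Qed.

Lemma Tr_det' p x0 c c1 d1 : upath p -> good (head x0 p) c ->
  Tr p c c1 -> Tr p c d1 -> agree (Bl (last x0 p)) c1 d1.
Proof. case: p => // v q Hu gc; exact: Tr_det. Qed.

Lemma Tr_good' p x0 c c' : Tr p c c' -> good (head x0 p) c -> good (last x0 p) c'.
Proof. case: p => // v q; exact: Tr_good. Qed.

Lemma head_rcons x0 s a : head x0 (rcons s a) = head x0 (s ++ a :: [::]).
Proof. by rewrite cats1. Qed.

Lemma step_inv p q x0 c c1 c2 : hstepU e U p q -> good (head x0 p) c ->
  Tr p c c1 -> Tr q c c2 -> agree (Bl (last x0 p)) c1 c2.
Proof.
move=> [[Hcp [Hcq Hs]] [Ip Iq]] gc T1 T2.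
have Up := upath_cp Hcp Ip; have Uq := upath_cp Hcq Iq.
have prep : forall s a t t', p = s ++ a :: t -> q = s ++ a :: t' ->
    exists ca ca', [/\ Tr (a :: t) ca c1, Tr (a :: t') ca' c2, agree (Bl a) ca ca' &
      good a ca].
  move=> s a t t' Ep Eq; rewrite Ep in T1 Up gc; rewrite Eq in T2 Uq.
  have [ca [Ta1 Ta2]] := Tr_split T1; have [ca' [Tb1 Tb2]] := Tr_split T2.
  have Ur : upath (rcons s a) by apply: (upath_prefix (t:=t)); [rewrite cat_rcons | case: (s)].
  have gr : good (head x0 (rcons s a)) c by rewrite head_rcons (head_cat _ _ _ _ t).
  exists ca, ca'; split => //.
    by have := Tr_det' Ur gr Ta1 Tb1; rewrite last_rcons.
  by have := Tr_good' Ta1 gr; rewrite last_rcons.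
case: Hs => [s1 [s2 [a [b [w [[Ep Eq]|[[Ep Eq]|[Ep [Eq [eab [ebw eaw]]]]]]]]]]].
- have [ca [ca' [Ta Tb Aa ga]]] := prep s1 a (b :: a :: s2) s2 Ep Eq.
  have Us2 : upath (a :: s2) by apply: (upath_suffix (s:=s1)); rewrite -Eq.
  have Ub : b \in U.
    by move: Up; rewrite Ep => /(upath_suffix (s:=s1)) [_]; rewrite /inU /= => /and3P[].
  have aU : a \in U by move: Us2 => [_ /andP[]].
  move: Ta; rewrite Tr_cons => -[cb [[gb Sb] Tb']]; move: Tb'; rewrite Tr_cons.
  move=> [ca2 [[ga2 Sa2] Ta2]].
  have A2 : agree (Bl a) ca2 ca'.
    apply: agree_trans _ Aa.
    case: Sb => [[Eb Ab]|[eab Ab]]; case: Sa2 => [[Ea Aa2]|[eba Aa2]].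
    + subst b; apply: agree_trans (agree_sym Aa2) (agree_sym Ab).
    + by subst b; rewrite e_irr in eba.
    + by subst b; rewrite e_irr in eab.
    + apply: agree_sym; apply: (Hdet Ub aU eba) => //.
      move=> z zI; have zI' : z \in Bl a :&: Bl b by rewrite setIC.
      by rewrite Ab // Aa2.
  have := Tr_det Us2 ga2 A2 Ta2 Tb.
  by rewrite Ep last_cat /=.
- have [ca [ca' [Ta Tb Aa ga]]] := prep s1 a (a :: s2) s2 Ep Eq.
  have Us2 : upath (a :: s2) by apply: (upath_suffix (s:=s1)); rewrite -Eq.
  move: Ta; rewrite Tr_cons => -[cx [[gx Sx] Tx]].
  have Ax : agree (Bl a) cx ca'.
    case: Sx => [[_ Ax]|[eaa _]]; last by rewrite e_irr in eaa.
    exact: agree_trans (agree_sym Ax) Aa.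
  have := Tr_det Us2 gx Ax Tx Tb.
  by rewrite Ep last_cat /=.
- have [ca [ca' [Ta Tb Aa ga]]] := prep s1 a (b :: w :: s2) (w :: s2) Ep Eq.
  have Uw : upath (w :: s2) by apply: (upath_suffix (s:=rcons s1 a)); rewrite cat_rcons -Eq.
  have UU : [/\ a \in U, b \in U & w \in U].
    move: Up; rewrite Ep => /(upath_suffix (s:=s1)) [_]; rewrite /inU /=.
    by case/and4P.
  case: UU => aU bU wU.
  move: Ta; rewrite Tr_cons => -[cb [[gb Sb] Tb']]; move: Tb'; rewrite Tr_cons.
  move=> [cw [[gw Sw] Tw]].
  move: Tb; rewrite Tr_cons => -[cw' [[gw' Sw'] Tw']].
  case: Sb => [[Eb _]|[_ Ab]]; first by subst b; rewrite e_irr in eab.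
  case: Sw => [[Ew _]|[_ Aw]]; first by subst w; rewrite e_irr in ebw.
  case: Sw' => [[Ew _]|[_ Aw']]; first by subst w; rewrite e_irr in eaw.
  have A3 : agree (Bl w) cw cw'.
    apply: (Htri aU bU wU eab ebw eaw) => // z; rewrite !in_setI => /andP[/andP[za zb] zw].
    have h1 : cb z = cw z by apply: Aw; rewrite in_setI zb zw.
    have h2 : ca z = cb z by apply: Ab; rewrite in_setI za zb.
    have h3 : ca' z = cw' z by apply: Aw'; rewrite in_setI za zw.
    by rewrite -h1 -h2 -h3 Aa.
  have := Tr_det Uw gw A3 Tw Tw'.
  by rewrite Ep last_cat /=.
Qed.


Lemma elem_last x0 p q : elem_step e p q -> last x0 p = last x0 q.
Proof.
case=> [s1 [s2 [a [b [c [[-> ->]|[[-> ->]|[-> [-> _]]]]]]]]]; by rewrite !last_cat.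
Qed.

Lemma Tr_total' p x0 c : upath p -> good (head x0 p) c -> exists c', Tr p c c'.
Proof. case: p => // v q Hu gc; have [c' [H _]] := Tr_total Hu gc; by exists c'. Qed.

Lemma hom_Tr x0 p q : homU e U p q -> p = q \/
  (closed_path e p /\ inU U p /\ closed_path e q /\ inU U q /\ head x0 p = head x0 q /\
   last x0 p = last x0 q /\ (forall c c1 c2, good (head x0 p) c -> Tr p c c1 -> Tr q c c2 ->
     agree (Bl (last x0 p)) c1 c2)).
Proof.
move=> H; elim: H => {p q} [p q Hs|p|p q _ IH|p m q _ IH1 _ IH2].
- right; case: (Hs) => [[Hcp [Hcq Hst]] [Ip Iq]].
  split => //; split => //; split => //; split => //; split; first exact: (elem_head x0 Hst).
  split; first exact: (elem_last x0 Hst).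
  by move=> c c1 c2 gc T1 T2; apply: step_inv Hs gc T1 T2.
- by left.
- case: IH => [->|[Hc1 [I1 [Hc2 [I2 [Eh [El H]]]]]]]; [by left|right].
  split => //; split => //; split => //; split => //; split; first by [].
  split; first by [].
  move=> c c1 c2 gc T1 T2; rewrite -El; apply: agree_sym; apply: H T2 T1.
  by rewrite Eh.
case: IH1 => [->//|[Hc1 [I1 [Hcm [Im [Eh1 [El1 H1]]]]]]].
case: IH2 => [<-|[_ [_ [Hc2 [I2 [Eh2 [El2 H2]]]]]]]; right.
  by split => //; split => //; split => //; split => //; split => //; split.
split => //; split => //; split => //; split => //; split; first by rewrite Eh1.
split; first by rewrite El1.
move=> c c1 c2 gc T1 T2.
have gm : good (head x0 m) c by rewrite -Eh1.
have [cm Tm] := Tr_total' (upath_cp Hcm Im) gm.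
apply: agree_trans (H1 _ _ _ gc T1 Tm) _; rewrite El1; apply: H2 Tm T2.
by rewrite -Eh1.
Qed.

Lemma upath_rU v0 ps : v0 \in U -> path (rU e U) v0 ps -> upath (v0 :: ps).
Proof.
move=> v0U Hp; split; first exact: path_rU_adj Hp.
by rewrite /inU /= v0U; apply: path_rU_all Hp.
Qed.

Theorem monodromy v0 c0 : v0 \in U -> connectedU e U -> SC e U -> good v0 c0 ->
  exists f, (forall x, x \in U -> f x \in P) /\
    (forall x y, x \in U -> y \in U -> e x y -> f x != f y) /\ agree (Bl v0) f c0.
Proof.
move=> v0U cU sU g0.
pose Q v c := exists ps, [/\ path (rU e U) v0 ps, last v0 ps = v & Tr (v0 :: ps) c0 c].
have goodQ : forall v c, Q v c -> good v c.
  by move=> v c [ps [_ <- Tp]]; apply: Tr_good Tp g0.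
have exQ : forall v, v \in U -> exists c, Q v c.
  move=> v vU; have /connectP [ps Hp Ev] := cU v0 v v0U vU.
  have [c [Tp _]] := Tr_total (upath_rU v0U Hp) g0; by exists c, ps.
have WD : forall v c1 c2, Q v c1 -> Q v c2 -> agree (Bl v) c1 c2.
  move=> v c1 c2 [ps1 [P1 E1 T1]] [ps2 [P2 E2 T2]].
  set t := rev (belast v0 ps2).
  have Erev : rev (v0 :: ps2) = v :: t by rewrite /t (lastI v0 ps2) rev_rcons E2.
  have U1 := upath_rU v0U P1; have U2 := upath_rU v0U P2.
  have Ut : upath (v :: t).
    split.
      rewrite /t -E2 rev_path.
      have Es : (fun x y : T => adj y x) =2 adj by move=> a b /=; rewrite eq_sym e_sym.
      by rewrite (eq_path Es); case: U2.
    move: U2 => [_]; rewrite -Erev /inU all_rev; by [].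
  have g1 : good v c1 by rewrite -E1; apply: Tr_good T1 g0.
  have [cL [TL _]] := Tr_total Ut g1.
  set L := v0 :: ps1 ++ t.
  have EL : L = belast v0 ps1 ++ v :: t by rewrite -cat_rcons -E1 -lastI.
  have TLL : Tr L c0 cL.
    rewrite EL; apply: Tr_catI TL; by rewrite -E1 -lastI.
  have lastL : last v0 (ps1 ++ t) = v0.
    rewrite last_cat E1.
    have : last v0 (v :: t) = v0 by rewrite -Erev rev_cons last_rcons.
    by [].
  have HcL : closed_path e L.
    split => //; rewrite cat_path; case: U1 => -> _; rewrite E1; by case: Ut.
  have HiL : inU U L.
    rewrite /L /inU /= all_cat v0U /=; apply/andP; split; [by case: U1 => _ /andP[] | by case: Ut => _ /andP[]].
  have AL : agree (Bl v0) cL c0.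
    case: (hom_Tr v0 (sU v0 (ps1 ++ t) HcL HiL)) => [EL1|[_ [_ [_ [_ [_ [El H]]]]]]].
      by move: TLL; rewrite /L EL1 /=; apply: agree_sym.
    by have := H c0 cL c0 g0 TLL (fun z _ => erefl); rewrite /= lastL.
  have T2' : Tr (v0 :: ps2) cL c1.
    have := Tr_rev TL g1; by rewrite -Erev revK.
  have := Tr_det U2 g0 (fun z _ => erefl) (Tr_start T2' AL) T2; by rewrite E2.
pose cf v := epsilon (inhabits c0) (Q v).
have cfQ : forall v, v \in U -> Q v (cf v).
  by move=> v vU; apply: epsilon_spec; apply: exQ.
have fval : forall v c, Q v c -> cf v v = c v.
  move=> v c Qc.
  have vU : v \in U by case: Qc => ps [Hp <- _]; case: (upath_rU v0U Hp) => _ /allP; apply; apply: mem_last.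
  by apply: (WD v _ _ (cfQ v vU) Qc); rewrite /Bl setU11.
have inBl : forall v, v \in Bl v by move=> v; rewrite /Bl setU11.
have nbBl : forall v w, w \in U -> e v w -> w \in Bl v.
  by move=> v w wU evw; rewrite /Bl !inE wU evw orbT.
have stepQ : forall v w c c', Q v c -> w \in U -> e v w -> good w c' ->
    agree (Bl v :&: Bl w) c c' -> Q w c'.
  move=> v w c c' [ps [Hp Ev Tp]] wU evw gc' A.
  have vU : v \in U by case: (upath_rU v0U Hp) => _ /allP; apply; rewrite -Ev mem_last.
  exists (rcons ps w); split; first by rewrite rcons_path Hp Ev /= evw vU wU.
    by rewrite last_rcons.
  rewrite -rcons_cons (lastI v0 ps) Ev -cats1 cat_rcons.
  apply: (Tr_catI (x:=v) (c1:=c)); first by rewrite -Ev -lastI.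
  by exists c'; split => //; split => //; right.
exists (fun v => cf v v); split; [|split].
- move=> x xU; have [H _] := goodQ _ _ (cfQ x xU); exact: H.
- move=> v w vU wU evw.
  have gv := goodQ _ _ (cfQ v vU).
  have [c' [gc' A]] := Hext vU wU evw gv.
  have Qw := stepQ v w _ _ (cfQ v vU) wU evw gc' A.
  rewrite (fval w c' Qw) (A v); last by rewrite in_setI inBl nbBl // e_sym.
  case: gc' => _ Hp; apply: Hp; [|exact: inBl|] => //.
  by rewrite nbBl // e_sym.
- move=> z; rewrite /Bl in_setU1 => /orP[/eqP->|zN].
    apply: fval; exists [::]; split => //.
  have /andP[zU ez] : (z \in U) && e v0 z by rewrite -nbrP.
  have [c' [gc' A]] := Hext v0U zU ez g0.
  rewrite (fval z c' (stepQ v0 z c0 c' _ zU ez gc' A)); last by exists [::].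
  by apply/esym/A; rewrite in_setI inBl nbBl.
Qed.

End Mono.


Section Inst.
Variables (T : finType) (e : rel T).
Hypotheses (e_sym : symmetric e) (e_irr : irreflexive e).
Implicit Types (U V W N : {set T}) (x y z u v w a b : T) (P : {set 'I_4}) (c d g : T -> 'I_4).

Lemma forced P (a b x y : 'I_4) : #|P| = 3 -> a \in P -> b \in P -> a != b ->
  x \in P -> y \in P -> x != a -> x != b -> y != a -> y != b -> x = y.
Proof.
move=> cP aP bP ab xP yP xa xb ya yb.
have bPa : b \in P :\ a by rewrite !inE eq_sym ab.
have : #|P :\ a :\ b| == 1 by move: cP; rewrite (cardsD1 a P) aP (cardsD1 b (P :\ a)) bPa; move=> /eqP; rewrite /= !add1n !eqSS.
move=> /cards1P [z Ez].
have : x \in P :\ a :\ b by rewrite !inE xa xb.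
have : y \in P :\ a :\ b by rewrite !inE ya yb.
by rewrite Ez !inE => /eqP-> /eqP->.
Qed.

Lemma spread W y (Q : T -> Prop) : Q y ->
  (forall a b, a \in W -> b \in W -> e a b -> Q a -> Q b) ->
  forall z, connect (rU e W) y z -> Q z.
Proof.
move=> Qy H z /connectP [p Hp ->]; elim: p y Qy Hp => //= b p IH a Qa.
by case/andP=> /andP[/andP[eab aW] bW] Hp; apply: IH (H a b aW bW eab Qa) Hp.
Qed.

Lemma proper_pal P P' U c : P \subset P' -> proper_on e P U c -> proper_on e P' U c.
Proof. by move=> /subsetP s [H1 H2]; split => // x /H1 /s. Qed.

Lemma Bl_nbr U v w : w \in U -> e v w -> w \in Bl e U v.
Proof. by move=> wU evw; rewrite /Bl !inE wU evw orbT. Qed.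

Lemma Bl_self U v : v \in Bl e U v.
Proof. by rewrite /Bl setU11. Qed.

Lemma det2D U P w y c1 c2 : #|P| = 3 -> connectedU e (nbr e U w) ->
  y \in nbr e U w -> good e U P w c1 -> good e U P w c2 ->
  c1 w = c2 w -> c1 y = c2 y -> agree (Bl e U w) c1 c2.
Proof.
move=> cP cW yW [g11 g12] [g21 g22] Ew Ey z.
rewrite /Bl in_setU1 => /orP[/eqP->//|zW].
have wB := Bl_self U w.
have inB : forall a, a \in nbr e U w -> a \in Bl e U w by move=> a aW; rewrite /Bl in_setU1 aW orbT.
have ewN : forall a, a \in nbr e U w -> e w a by move=> a; rewrite nbrP => /andP[].
apply: (spread (W:=nbr e U w) (Q:=fun z => c1 z = c2 z) Ey _ (cW y z yW zW)) => a b aW bW eab Ea.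
apply: (forced (a := c1 w) (b := c1 a) cP) => //.
- exact: g11.
- by apply: g11; apply: inB.
- by apply: g12 => //; [apply: inB | apply: ewN].
- by apply: g11; apply: inB.
- by apply: g21; apply: inB.
- by rewrite eq_sym; apply: g12 => //; [apply: inB | apply: ewN].
- by apply: g12 => //; [apply: inB | apply: inB | rewrite e_sym].
- by rewrite Ew eq_sym; apply: g22 => //; [apply: inB | apply: ewN].
- by rewrite Ea; apply: g22 => //; [apply: inB | apply: inB | rewrite e_sym].
Qed.


Definition evenH U := forall w, w \in U -> Sd e 1 (nbr e U w) -> ~~ odd #|nbr e U w|.

Lemma ext2D U P w y (al be : 'I_4) : #|P| = 3 -> Gstep e (SB e 1) U -> evenH U ->
  w \in U -> y \in nbr e U w -> al \in P -> be \in P -> be != al ->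
  exists c', [/\ good e U P w c', c' w = al & c' y = be].
Proof.
move=> cP [G _] Hev wU yW alP beP beal.
have /cards2P [a [b [ab Eab]]] : #|P :\ al| == 2.
  by move: cP; rewrite (cardsD1 al P) alP => /eqP; rewrite /= add1n eqSS.
have beab : be \in [set a; b] by rewrite -Eab !inE beal.
have HW : Bd e 1 (nbr e U w) \/ (Sd e 1 (nbr e U w) /\ ~~ odd #|nbr e U w|).
  by case: (G w wU) => [H|H]; [right; split => //; apply: Hev | left].
have [g [Hg gy]] := col1D e_sym e_irr ab beab yW HW.
have subP : [set a; b] \subset P by rewrite -Eab subsetDl.
exists (fun z => if z == w then al else g z); split.
- apply: extend_col => //; first exact: proper_pal subP Hg.
  move=> z zW _; case: Hg => H _; move: (H z zW); rewrite -Eab !inE.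
  by case/andP.
- by rewrite eqxx.
- have : y != w by move: yW; rewrite nbrP => /andP[_]; apply: contraTneq => ->; rewrite e_irr.
  by move/negbTE->.
Qed.

Lemma thm2D U P v0 c0 : #|P| = 3 -> Sd e 2 U \/ Bd e 2 U -> evenH U ->
  v0 \in U -> good e U P v0 c0 ->
  exists f, (forall x, x \in U -> f x \in P) /\
    (forall x y, x \in U -> y \in U -> e x y -> f x != f y) /\ agree (Bl e U v0) f c0.
Proof.
move=> cP HU Hev v0U g0.
have G2 : Gstep e (SB e 1) U.
  by case: HU => [/Sd_succ [] | /Bd_succ []].
have cL : forall w, w \in U -> connectedU e (nbr e U w).
  move=> w wU; apply: (@SB_connected _ _ e_sym e_irr 0); case: G2 => G _; exact: G.
have inN : forall v w, v \in U -> e w v -> v \in nbr e U w by move=> v w vU ewv; rewrite nbrP vU.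
apply: (monodromy e_sym e_irr) => //.
- move=> v w vU wU evw c [gc1 gc2].
  have cwP : c w \in P by apply: gc1; apply: Bl_nbr.
  have cvP : c v \in P by apply: gc1; apply: Bl_self.
  have cvw : c v != c w by apply: gc2 => //; [apply: Bl_self | apply: Bl_nbr].
  have ewv : e w v by rewrite e_sym.
  have [c' [[gc'1 gc'2] c'w c'v]] := ext2D cP G2 Hev wU (inN v w vU ewv) cwP cvP cvw.
  exists c'; split; first by split.
  move=> z; rewrite in_setI => /andP[zBv zBw].
  move: (zBw); rewrite /Bl in_setU1 => /orP[/eqP->//|zW].
  move: (zBv); rewrite /Bl in_setU1 => /orP[/eqP->//|zNv].
  have /andP[zU ewz] : (z \in U) && e w z by rewrite -nbrP.
  have /andP[_ evz] : (z \in U) && e v z by rewrite -nbrP.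
  have cwv : c w != c v by rewrite eq_sym.
  have xa : c z != c w by rewrite eq_sym; apply: gc2 => //; apply: Bl_nbr.
  have xb : c z != c v by rewrite eq_sym; apply: gc2 => //; apply: Bl_self.
  have ya : c' z != c w by rewrite -c'w eq_sym; apply: gc'2 => //; apply: Bl_self.
  have yb : c' z != c v by rewrite -c'v eq_sym; apply: gc'2 => //; apply: Bl_nbr => //; rewrite e_sym.
  exact: (forced cP cwP cvP cwv (gc1 z zBv) (gc'1 z zBw) xa xb ya yb).
- move=> v w vU wU evw c1 c2 g1 g2 A.
  have vBv := Bl_self U v; have wBw := Bl_self U w.
  have wBv : w \in Bl e U v by apply: Bl_nbr.
  have vBw : v \in Bl e U w by apply: Bl_nbr; rewrite // e_sym.
  apply: (det2D cP (cL w wU) (inN v w vU _) g1 g2); first by rewrite e_sym.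
    by apply: A; rewrite in_setI wBv wBw.
  by apply: A; rewrite in_setI vBv vBw.
- move=> a b w aU bU wU eab ebw eaw d1 d2 g1 g2 A.
  apply: (det2D cP (cL w wU) (inN a w aU _) g1 g2); first by rewrite e_sym.
    by apply: A; rewrite !in_setI Bl_self !Bl_nbr.
  by apply: A; rewrite !in_setI Bl_self !Bl_nbr // e_sym.
- exact: (@SB_connected _ _ e_sym e_irr 1 _ HU).
- exact: (SB2_SC e_sym e_irr HU).
Qed.


Lemma card_D1T (k : 'I_4) : #|[set: 'I_4] :\ k| = 3.
Proof. by move: (cardsD1 k [set: 'I_4]); rewrite in_setT cardsT card_ord add1n => -[]. Qed.

Lemma det3D w p q c1 c2 : connectedU e (nbr e [set: T] w) ->
  (forall y, y \in nbr e [set: T] w -> connectedU e (nbr e (nbr e [set: T] w) y)) ->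
  p \in nbr e [set: T] w -> q \in nbr e (nbr e [set: T] w) p ->
  good e [set: T] [set: 'I_4] w c1 -> good e [set: T] [set: 'I_4] w c2 ->
  c1 w = c2 w -> c1 p = c2 p -> c1 q = c2 q -> agree (Bl e [set: T] w) c1 c2.
Proof.
move=> cS cL pS qL [_ g1] [_ g2] Ew Ep Eq.
set S := nbr e [set: T] w in cS cL pS qL *.
have inB : forall a, a \in S -> a \in Bl e [set: T] w by move=> a aS; rewrite /Bl in_setU1 aS orbT.
have ewS : forall a, a \in S -> e w a by move=> a; rewrite nbrP => /andP[].
have wB := Bl_self [set: T] w.
have inL : forall y a, a \in nbr e S y -> a \in S /\ e y a by move=> y a; rewrite nbrP => /andP[].
have inner : forall y z0, y \in S -> c1 y = c2 y -> z0 \in nbr e S y -> c1 z0 = c2 z0 ->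
    forall z, z \in nbr e S y -> c1 z = c2 z.
  move=> y z0 yS Ey z0L Ez0 z zL.
  apply: (spread (W:=nbr e S y) (Q:=fun z => c1 z = c2 z) Ez0 _ (cL y yS z0 z z0L zL)).
  move=> a b aL bL eab Ea.
  have [aS eya] := inL y a aL; have [bS eyb] := inL y b bL.
  have nw : forall c, (forall x y, x \in Bl e [set: T] w -> y \in Bl e [set: T] w -> e x y -> c x != c y) ->
      forall u, u \in S -> c u \in [set: 'I_4] :\ c w.
    by move=> c gc u uS; rewrite !inE andbT eq_sym; apply: gc => //; [apply: inB | apply: ewS].
  apply: (forced (a := c1 y) (b := c1 a) (card_D1T (c1 w))).
  - exact: nw g1 y yS.
  - exact: nw g1 a aS.
  - by apply: g1 => //; apply: inB.
  - exact: nw g1 b bS.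
  - by rewrite Ew; apply: nw g2 b bS.
  - by rewrite eq_sym; apply: g1 => //; apply: inB.
  - by rewrite eq_sym; apply: g1 => //; apply: inB.
  - by rewrite Ey eq_sym; apply: g2 => //; apply: inB.
  - by rewrite Ea eq_sym; apply: g2 => //; apply: inB.
move=> z; rewrite /Bl in_setU1 => /orP[/eqP->//|zS].
pose Q y := c1 y = c2 y /\ forall z, z \in nbr e S y -> c1 z = c2 z.
have Qp : Q p by split => //; apply: inner Ep qL Eq.
suff step : forall a b, a \in S -> b \in S -> e a b -> Q a -> Q b.
  by case: (spread (W:=S) (Q:=Q) Qp step (cS p z pS zS)).
move=> a b aS bS eab [Ea Ha].
have bL : b \in nbr e S a by rewrite nbrP bS.
have Eb := Ha b bL.
split => //; apply: (inner b a bS Eb) => //; by rewrite nbrP aS e_sym.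
Qed.


Lemma link_eq w y : nbr e (nbr e [set: T] w) y = edge_link e w y.
Proof. by apply/setP=> z; rewrite !inE. Qed.

Lemma two_in (P : {set 'I_4}) : #|P| = 3 -> exists al be, [/\ al \in P, be \in P & be != al].
Proof.
move=> cP.
have /card_gt0P [al alP] : 0 < #|P| by rewrite cP.
have : 0 < #|P :\ al| by move: cP; rewrite (cardsD1 al P) alP add1n => -[->].
move=> /card_gt0P [be]; rewrite !inE => /andP[beal beP]; by exists al, be.
Qed.

Theorem main3D : Gclass e 3 [set: T] -> simply_connected e ->
  (forall a b : T, e a b -> interior_edge e a b -> ~~ odd (edge_degree e a b)) ->
  exists f : T -> 'I_4, forall x y : T, e x y -> f x != f y.
Proof.
move=> [G [v0 [_ _]]] SCg Hev.
have HS : forall w, Sd e 2 (nbr e [set: T] w) \/ Bd e 2 (nbr e [set: T] w).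
  by move=> w; apply: G; rewrite in_setT.
have G2 : forall w, Gstep e (SB e 1) (nbr e [set: T] w).
  by move=> w; case: (HS w) => [/Sd_succ [] | /Bd_succ []].
have evS : forall w, evenH (nbr e [set: T] w).
  move=> w y yS S1.
  have ewy : e w y by move: yS; rewrite nbrP => /andP[].
  have := Hev w y ewy; rewrite /interior_edge /edge_degree -link_eq; apply.
  exact: S1_cycle.
have cS : forall w, connectedU e (nbr e [set: T] w).
  by move=> w; apply: (@SB_connected _ _ e_sym e_irr 1); apply: HS.
have cL : forall w y, y \in nbr e [set: T] w -> connectedU e (nbr e (nbr e [set: T] w) y).
  move=> w y yS; apply: (@SB_connected _ _ e_sym e_irr 0); by case: (G2 w) => H _; apply: H.
have neL : forall w y, y \in nbr e [set: T] w -> exists p, p \in nbr e (nbr e [set: T] w) y.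
  move=> w y yS; apply: (@SB_nonempty _ e 1); by case: (G2 w) => H _; apply: H.
have inS : forall w y, e w y -> y \in nbr e [set: T] w by move=> w y ewy; rewrite nbrP in_setT.
have [c0 g0] : exists c0, good e [set: T] [set: 'I_4] v0 c0.
  have [y0 [y0S _]] := (G2 v0).2.
  have [y1 y1L] := neL v0 y0 y0S.
  have [al [be [alP beP beal]]] := two_in (card_D1T ord0).
  have [ci [gi _ _]] := ext2D (card_D1T ord0) (G2 v0) (evS v0) y0S y1L alP beP beal.
  have [g [g1 [g2 _]]] := thm2D (card_D1T ord0) (HS v0) (evS v0) y0S gi.
  exists (fun z => if z == v0 then ord0 else g z).
  apply: extend_col => //; first by rewrite in_setT.
    by split => // x _; rewrite in_setT.
  move=> y yS _; have := g1 y yS; rewrite !inE => /andP[]; by rewrite eq_sym.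
have conn : connectedU e [set: T].
  move=> x y _ _; case: SCg => Hc _; have := Hc x y; apply: connect_sub => a b eab.
  by apply: connect1; rewrite /= eab !in_setT.
have Hext : forall v w, v \in [set: T] -> w \in [set: T] -> e v w -> forall c,
    good e [set: T] [set: 'I_4] v c -> exists c', good e [set: T] [set: 'I_4] w c' /\
    agree (Bl e [set: T] v :&: Bl e [set: T] w) c c'.
  move=> v w _ _ evw c [_ gc].
  set S := nbr e [set: T] w.
  have vS : v \in S by apply: inS; rewrite e_sym.
  have wBv : w \in Bl e [set: T] v by apply: Bl_nbr; rewrite ?in_setT.
  have gv : good e S ([set: 'I_4] :\ c w) v c.
    have sub : Bl e S v \subset Bl e [set: T] v.
      apply/subsetP => z; rewrite /Bl !in_setU1 !nbrP in_setT => /orP[->//|/andP[_ ->]].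
      by rewrite orbT.
    split.
      move=> z zB; rewrite !inE andbT.
      have zS : z \in S.
        by move: zB; rewrite /Bl in_setU1 => /orP[/eqP->//|]; rewrite nbrP => /andP[].
      by rewrite eq_sym; apply: gc => //; [move/subsetP: sub; apply|rewrite nbrP in zS; case/andP: zS].
    by move=> x y xB yB; apply: gc; move/subsetP: sub; apply.
  have [g [g1 [g2 Ag]]] := thm2D (card_D1T (c w)) (HS w) (evS w) vS gv.
  exists (fun z => if z == w then c w else g z); split.
    apply: extend_col => //; first by rewrite in_setT.
      by split => // x _; rewrite in_setT.
    move=> y yS _; have := g1 y yS; rewrite !inE => /andP[]; by rewrite eq_sym.
  move=> z; rewrite in_setI => /andP[zBv zBw].
  move: zBw; rewrite /Bl in_setU1 => /orP[/eqP->|zS]; first by rewrite eqxx.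
  have zw : z != w by move: zS; rewrite nbrP => /andP[_]; apply: contraTneq => ->; rewrite e_irr.
  rewrite (negbTE zw) Ag //.
  move: zBv; rewrite /Bl !in_setU1 => /orP[->//|zv]; apply/orP; right.
  by move: zv zS; rewrite !nbrP => /andP[_ ->] ->.
have Hdet : forall v w, v \in [set: T] -> w \in [set: T] -> e v w -> forall c1 c2,
    good e [set: T] [set: 'I_4] w c1 -> good e [set: T] [set: 'I_4] w c2 ->
    agree (Bl e [set: T] v :&: Bl e [set: T] w) c1 c2 -> agree (Bl e [set: T] w) c1 c2.
  move=> v w _ _ evw c1 c2 g1 g2 A.
  have vS : v \in nbr e [set: T] w by apply: inS; rewrite e_sym.
  have [p pL] := neL w v vS.
  have [pS evp] : p \in nbr e [set: T] w /\ e v p by move: pL; rewrite nbrP => /andP[].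
  have pL' : p \in nbr e (nbr e [set: T] w) v by [].
  apply: (det3D (cS w) (cL w) vS pL g1 g2).
  - by apply: A; rewrite in_setI Bl_self andbT Bl_nbr ?in_setT.
  - by apply: A; rewrite in_setI Bl_self Bl_nbr ?in_setT // e_sym.
  - by apply: A; rewrite in_setI !Bl_nbr ?in_setT //; move: pS; rewrite nbrP => /andP[].
have Htri : forall a b w, a \in [set: T] -> b \in [set: T] -> w \in [set: T] ->
    e a b -> e b w -> e a w -> forall d1 d2,
    good e [set: T] [set: 'I_4] w d1 -> good e [set: T] [set: 'I_4] w d2 ->
    agree (Bl e [set: T] a :&: Bl e [set: T] b :&: Bl e [set: T] w) d1 d2 ->
    agree (Bl e [set: T] w) d1 d2.
  move=> a b w _ _ _ eab ebw eaw d1 d2 g1 g2 A.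
  have aS : a \in nbr e [set: T] w by apply: inS; rewrite e_sym.
  have bL : b \in nbr e (nbr e [set: T] w) a by rewrite nbrP eab andbT; apply: inS; rewrite e_sym.
  apply: (det3D (cS w) (cL w) aS bL g1 g2).
  - by apply: A; rewrite !in_setI Bl_self !Bl_nbr ?in_setT.
  - by apply: A; rewrite !in_setI Bl_self !Bl_nbr ?in_setT // e_sym.
  - by apply: A; rewrite !in_setI Bl_self !Bl_nbr ?in_setT // e_sym.
have [f [_ [Hf _]]] := monodromy e_sym e_irr Hext Hdet Htri (in_setT v0) conn (global_SC SCg) g0.
by exists f => x y; apply: Hf; rewrite in_setT.
Qed.

End Inst.


Theorem mainTheorem11 (T : finType) (e : rel T)
  (e_sym : symmetric e) (e_irr : irreflexive e) :
  Gclass e 3 [set: T] ->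
  simply_connected e ->
  (forall a b : T, e a b -> interior_edge e a b -> ~~ odd (edge_degree e a b)) ->
  exists f : T -> 'I_4, forall x y : T, e x y -> f x != f y.
Proof. exact: (main3D e_sym e_irr). Qed.
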